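(* Let $\mu$ be a probability measure and $\omega\ge0$ a weight with $\int\omega\,d\mu<\infty$. Assume there is $C>0$ such that $\inf_c\int|g-c|\,\omega\,d\mu\le C\int\sqrt{\Gamma(g)}\,d\mu$ for all $g\in\mathcal A$. Let $G(s)=\inf\{u:\mu(\omega\le u)>s\}$ for $s\in(0,1)$. Then for all $s\in(0,1)$ with $G(s)>0$ and all $g\in\mathcal A$, $$\inf_{c\in\mathbb R}\int|g-c|\,d\mu\le\frac{C}{G(s)}\int\sqrt{\Gamma(g)}\,d\mu+s\,\mathrm{Osc}_\mu(g),$$ where $\mathrm{Osc}_\mu(g)=\operatorname{ess\,sup}g-\operatorname{ess\,inf}g$.
   Context: Standing framework: $E$ Polish, $\mu$ a probability measure on $E$, $L$ a $\mu$-symmetric diffusion operator with an algebra $\mathcal A$ of bounded functions and carré du champ $\Gamma(f)=\Gamma(f,f)=\frac12(L(f^2)-2fLf)\ge0$. (Model case $E=\mathbb R^n$, $\Gamma(f)=|\nabla f|^2$.) *)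

(* Defs.v *)
From HB Require Import structures.
From mathcomp Require Import all_boot all_order all_algebra.
From mathcomp Require Import all_classical all_reals all_analysis ess_sup_inf.
Set Implicit Arguments. Unset Strict Implicit. Unset Printing Implicit Defensive.
Import Order.TTheory GRing.Theory Num.Theory.
Local Open Scope classical_set_scope.
Local Open Scope ring_scope.

Definition Osc d (T : measurableType d) (R : realType)
  (mu : {measure set T -> \bar R}) (g : T -> R) : \bar R :=
  (ess_sup mu (EFin \o g) - ess_inf mu (EFin \o g))%E.

Definition Gquant d (T : measurableType d) (R : realType)
  (mu : {measure set T -> \bar R}) (w : T -> R) (s : R) : R :=
  inf [set u : R | (s%:E < mu [set x | (w x <= u)%R])%E].

Definition wdev d (T : measurableType d) (R : realType)
  (mu : {measure set T -> \bar R}) (w g : T -> R) : \bar R :=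
  ereal_inf [set (\int[mu]_x (`|g x - c| * w x)%:E)%E | c in [set: R]].

(* Main.v *)
Require Import Defs.
From HB Require Import structures.
From mathcomp Require Import all_boot all_order all_algebra.
From mathcomp Require Import all_classical all_reals all_analysis ess_sup_inf.
From mathcomp Require Import measurable_realfun lra.
Import Order.TTheory GRing.Theory Num.Theory.
Local Open Scope classical_set_scope.
Local Open Scope ring_scope.

Definition clampr {R : realType} (m M c : R) : R :=
  if c < m then m else if M < c then M else c.

Lemma clampr_prop (R : realType) (m M c a : R) : m <= a -> a <= M ->
  `|a - clampr m M c| <= `|a - c| /\ `|a - clampr m M c| <= M - m.
Proof.
move=> ha hb; rewrite /clampr.
case: ifP => h1.
  rewrite !ger0_norm ?subr_ge0 //; try lra; split; lra.
case: ifP => h2.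
  rewrite !ler0_norm ?subr_le0 //; try lra; split; lra.
move/negbT: h1; move/negbT: h2; rewrite -!leNgt => h2 h1.
split => //.
rewrite ler_norml; apply/andP; split; lra.
Qed.

Lemma real_lim (R : realType) (x y z G : R) : 0 < G -> 0 <= y ->
  (forall u, 0 < u -> u < G -> x <= y / u + z) -> x <= y / G + z.
Proof.
move=> G0 y0 H.
rewrite leNgt; apply/negP => hlt.
have t0 : 0 < x - z.
  have : 0 <= y / G by apply: divr_ge0 => //; exact: ltW.
  lra.
have hyt : y < (x - z) * G.
  by rewrite -ltr_pdivrMr //; lra.
set u := (y / (x - z) + G) / 2.
have hy1 : y / (x - z) < G by rewrite ltr_pdivrMr // mulrC.
have hy0 : 0 <= y / (x - z) by apply: divr_ge0 => //; exact: ltW.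
have u0 : 0 < u by rewrite /u; lra.
have uG : u < G by rewrite /u; lra.
have hyu : y / (x - z) < u by rewrite /u; lra.
have := H u u0 uG.
have : y / u < x - z.
  rewrite ltr_pdivrMr //.
  by move: hyu; rewrite ltr_pdivrMr // mulrC.
lra.
Qed.

Lemma meas_le (d : measure_display) (T : measurableType d) (R : realType)
  (w : T -> R) (hwm : measurable_fun setT w) (u : R) :
  measurable [set x | w x <= u].
Proof.
have := hwm measurableT _ (measurable_itv `]-oo, u]).
rewrite setTI; congr measurable; apply/seteqP; split => x /=;
  by rewrite in_itv /=.
Qed.

Lemma Gquant_bound (d : measure_display) (T : measurableType d) (R : realType)
  (mu : probability T R) (w : T -> R) (hw0 : forall x, 0 <= w x) (s u : R) :
  0 < s -> 0 < u -> u < Gquant mu w s -> (mu [set x | (w x <= u)%R] <= s%:E)%E.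
Proof.
move=> s0 u0 uG; rewrite leNgt; apply/negP => hlt.
have : Gquant mu w s <= u.
  apply: ge_inf => //.
  exists 0 => v /= hv; rewrite leNgt; apply/negP => v0.
  have : [set x | w x <= v] = set0.
    apply/seteqP; split => x //= hx.
    have := hw0 x; lra.
  move=> e; move: hv; rewrite e measure0 lte_fin; lra.
lra.
Qed.

Lemma ess_fin (d : measure_display) (T : measurableType d) (R : realType)
  (mu : probability T R) (g : T -> R) (K : R) (hK : forall x, `|g x| <= K) :
  exists m M : R, ess_inf mu (EFin \o g) = m%:E /\ ess_sup mu (EFin \o g) = M%:E
   /\ m <= M /\ (\forall x \ae mu, m <= g x <= M).
Proof.
have mu0 : (0 < mu setT)%E by rewrite probability_setT lte01.
have gK x : (-K <= g x) && (g x <= K) by rewrite -ler_norml.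
have i1 : ((-K)%:E <= ess_inf mu (EFin \o g))%E.
  by apply: ess_inf_ler => x; rewrite lee_fin; case/andP: (gK x).
have i2 : (ess_inf mu (EFin \o g) <= K%:E)%E.
  rewrite -(@ess_inf_cstr _ _ _ mu K) //; apply: le_ess_inf; apply: nearW => x /=.
  by rewrite lee_fin; case/andP: (gK x).
have s1 : (ess_sup mu (EFin \o g) <= K%:E)%E.
  by apply: ess_sup_ler => x; rewrite lee_fin; case/andP: (gK x).
have s2 : ((-K)%:E <= ess_sup mu (EFin \o g))%E.
  rewrite -(@ess_sup_cstr _ _ _ mu (-K)) //; apply: le_ess_sup; apply: nearW => x /=.
  by rewrite lee_fin; case/andP: (gK x).
have fi : ess_inf mu (EFin \o g) \is a fin_num.
  by rewrite fin_numElt (lt_le_trans _ i1) ?ltNyr // (le_lt_trans i2) ?ltry.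
have fs : ess_sup mu (EFin \o g) \is a fin_num.
  by rewrite fin_numElt (lt_le_trans _ s2) ?ltNyr // (le_lt_trans s1) ?ltry.
exists (fine (ess_inf mu (EFin \o g))), (fine (ess_sup mu (EFin \o g))).
rewrite !fineK //.
have ae : \forall x \ae mu, (fine (ess_inf mu (EFin \o g)) <= g x <= fine (ess_sup mu (EFin \o g))).
  have := @ess_inf_le _ _ _ mu (EFin \o g); have := @ess_sup_ge _ _ _ mu (EFin \o g).
  apply: filterS2 => x /= h1 h2.
  by rewrite -!lee_fin !fineK // h1 h2.
split => //; split => //; split => //.
have := ae_properfilter_algebraOfSetsType mu0.
move=> PF.
have [x /andP[h1 h2]] := @filter_ex _ _ PF _ ae.
exact: le_trans h1 h2.
Qed.
Lemma mabs (d : measure_display) (T : measurableType d) (R : realType)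
  (g w : T -> R) (hgm : measurable_fun setT g) (hwm : measurable_fun setT w) (c : R) :
  measurable_fun setT (fun x => (`|g x - c| * w x)%:E).
Proof.
apply/measurable_EFinP; apply: measurable_funM => //.
apply: (measurableT_comp (@normr_measurable R setT)) => //.
exact: measurable_funB hgm (measurable_cst _).
Qed.

Lemma core (d : measure_display) (T : measurableType d) (R : realType)
  (mu : probability T R) (g w : T -> R) (hgm : measurable_fun setT g)
  (hwm : measurable_fun setT w) (hw0 : forall x, 0 <= w x) (m M : R)
  (hmM : m <= M) (ae : \forall x \ae mu, m <= g x <= M) (s c u : R)
  (s0 : 0 <= s) (u0 : 0 < u) (hD : (mu [set x | (w x <= u)%R] <= s%:E)%E) :
  (wdev mu (fun _ => 1%R) g <=
     (u^-1)%:E * \int[mu]_x (`|g x - c| * w x)%:E + (s * (M - m))%:E)%E.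
Proof.
set c' := clampr m M c.
set D := [set x | w x <= u].
have mD : measurable D by exact: meas_le.
apply: (@le_trans _ _ (\int[mu]_x (`|g x - c'| * 1)%R%:E)%E).
  by apply: ereal_inf_lbound; exists c'.
apply: (@le_trans _ _ (\int[mu]_x ((u^-1)%:E * (`|g x - c| * w x)%R%:E
                          + (M - m)%R%:E * (\1_D x)%:E))%E).
  apply: ae_ge0_le_integral => //.
  - by apply: mabs => //; exact: measurable_cst.
  - move=> x _; apply: adde_ge0; apply: mule_ge0; rewrite lee_fin ?invr_ge0;
      by [apply: ltW | apply: mulr_ge0 | rewrite subr_ge0 | ].
  - apply: emeasurable_funD; apply: emeasurable_funM => //; try exact: mabs.
    by apply/measurable_EFinP; exact: measurable_indic.
  - apply: filterS ae => x /andP[h1 h2] _.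
    have [c1 c2] := @clampr_prop _ _ _ c _ h1 h2.
    rewrite -!EFinM -EFinD lee_fin mulr1.
    rewrite /indic /=.
    case: (boolP (x \in D)) => hx.
      have : 0 <= u^-1 * (`|g x - c| * w x).
        by apply: mulr_ge0; [rewrite invr_ge0 ltW | apply: mulr_ge0].
      rewrite mulr1; lra.
    rewrite mulr0 addr0.
    have wu : u < w x.
      by rewrite ltNge; apply: contra hx => h; exact: mem_set.
    apply: (le_trans c1).
    rewrite mulrCA -[leLHS]mulr1 ler_wpM2l // mulrC.
    by rewrite ler_pdivlMr // mul1r ltW.
rewrite ge0_integralD //.
- rewrite ge0_integralZl //; last by rewrite lee_fin invr_ge0 ltW.
  + rewrite ge0_integralZl //; last by rewrite lee_fin subr_ge0.
    * rewrite integral_indic // setIT.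
      apply: leeD => //.
      rewrite EFinM muleC; apply: lee_wpmul2r => //.
      by rewrite lee_fin subr_ge0.
    * by apply/measurable_EFinP; exact: measurable_indic.
    * exact: mabs.
  + by move=> x _; rewrite lee_fin; apply: mulr_ge0.
- move=> x _; apply: mule_ge0; rewrite lee_fin;
    [by rewrite invr_ge0 ltW | exact: mulr_ge0].
- by apply: emeasurable_funM => //; exact: mabs.
- by move=> x _; apply: mule_ge0; rewrite lee_fin ?subr_ge0.
- apply: emeasurable_funM => //.
  by apply/measurable_EFinP; exact: measurable_indic.
Qed.

Theorem mainTheorem11 (d : measure_display) (T : measurableType d) (R : realType)
  (mu : probability T R)
  (A : set (T -> R)) (Gamma : (T -> R) -> T -> R)
  (hA : forall g, A g -> measurable_fun setT g /\ exists M : R, forall x, `|g x| <= M)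
  (hGamma : forall g, A g -> measurable_fun setT (Gamma g) /\ forall x, 0 <= Gamma g x)
  (w : T -> R) (hwm : measurable_fun setT w) (hw0 : forall x, 0 <= w x)
  (hwint : (\int[mu]_x (w x)%:E < +oo)%E)
  (C : R) (hC : 0 < C)
  (hyp : forall g, A g ->
     (wdev mu w g <= C%:E * \int[mu]_x (Num.sqrt (Gamma g x))%:E)%E) :
  forall s : R, 0 < s -> s < 1 -> 0 < Gquant mu w s ->
  forall g, A g ->
    (wdev mu (fun _ => 1%R) g <=
       (C / Gquant mu w s)%:E * \int[mu]_x (Num.sqrt (Gamma g x))%:E
       + s%:E * Osc mu g)%E.
Proof.
move=> s s0 s1 hG g hg.
have [hgm [K hK]] := hA g hg.
have [m [M [Em [EM [hmM ae]]]]] := @ess_fin _ _ _ mu g K hK.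
have -> : Osc mu g = (M - m)%:E by rewrite /Osc Em EM.
rewrite -EFinM.
set Gs := Gquant mu w s in hG *.
set z := s * (M - m).
set X := wdev mu (fun _ => 1%R) g.
set I := (\int[mu]_x (Num.sqrt (Gamma g x))%:E)%E.
set Y := fun c => (\int[mu]_x (`|g x - c| * w x)%:E)%E.
have z0 : 0 <= z by apply: mulr_ge0; rewrite ?subr_ge0 // ltW.
have Y0 c : (0 <= Y c)%E.
  by apply: integral_ge0 => x _; rewrite lee_fin; apply: mulr_ge0.
have X0 : (0 <= X)%E.
  apply: le_ereal_inf_tmp => _ [c _ <-].
  by apply: integral_ge0 => x _; rewrite lee_fin; apply: mulr_ge0.
have percu c u : 0 < u -> u < Gs -> (X <= (u^-1)%:E * Y c + z%:E)%E.
  move=> u0 uG; apply: core => //; first exact: ltW.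
  exact: Gquant_bound.
have Gs2 : 0 < Gs / 2 by apply: divr_gt0.
have Gs2' : Gs / 2 < Gs by lra.
have perc c : (X <= (Gs^-1)%:E * Y c + z%:E)%E.
  have := Y0 c; case eY: (Y c) => [y| |] y0.
  - have := percu c _ Gs2 Gs2'; rewrite eY.
    case eX: X => [x| |] hb.
    + rewrite -EFinM -EFinD lee_fin mulrC; apply: real_lim => //.
      move=> u u0 uG; have := percu c u u0 uG.
      by rewrite eX eY -EFinM -EFinD lee_fin mulrC.
    + by move: hb; rewrite -EFinM -EFinD leye_eq.
    + by move: X0; rewrite eX.
  - rewrite muleC gt0_mulye ?lte_fin ?invr_gt0 // addye //; exact: leey.
  - by move: y0; rewrite leeNy_eq.
case eX: X => [x| |].
- have lb c : ((Gs * (x - z))%:E <= Y c)%E.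
    have := perc c; rewrite eX.
    case: (Y c) => [y| |].
    + rewrite -EFinM -EFinD !lee_fin => h.
      rewrite mulrC -ler_pdivlMr // mulrC; lra.
    + by rewrite leey.
    + by rewrite muleC gt0_mulNye ?lte_fin ?invr_gt0 // addNye leeNy_eq.
  have h1 : ((Gs * (x - z))%:E <= C%:E * I)%E.
    apply: le_trans (hyp g hg).
    by apply: le_ereal_inf_tmp => _ [c0 _ <-]; exact: lb.
  move: h1; case: I => [i| |].
  + rewrite -!EFinM -EFinD !lee_fin => h.
    suff : x - z <= C / Gs * i by lra.
    by rewrite mulrAC ler_pdivlMr // mulrC.
  + move=> _; rewrite muleC gt0_mulye ?lte_fin ?divr_gt0 // addye //; exact: leey.
  + by rewrite muleC gt0_mulNye ?lte_fin.
- have Yoo c : Y c = +oo%E.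
    have := perc c; rewrite eX.
    case: (Y c) => [y| |] //.
    by rewrite muleC gt0_mulNye ?lte_fin ?invr_gt0 // addNye leeNy_eq.
  have h1 : (+oo%E <= C%:E * I)%E.
    apply: le_trans (hyp g hg).
    by apply: le_ereal_inf_tmp => _ [c0 _ <-]; rewrite -/(Y c0) Yoo.
  move: h1; case: I => [i| |].
  + by rewrite -EFinM leye_eq.
  + move=> _; rewrite muleC gt0_mulye ?lte_fin ?divr_gt0 // addye //; exact: leey.
  + by rewrite muleC gt0_mulNye ?lte_fin.
- by rewrite leNye.
Qed.
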